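(* Let $A\in\mathbb{Q}_Q(\mathbb{R}^n)$ with signature $S(A)=(J,k_1,\dots,k_J)$. Then the tangent cone $\mathbf{Tan}_A(\mathbb{Q}_Q(\mathbb{R}^n))$ is isometric to the product $\mathbb{Q}_{k_1}(\mathbb{R}^n)\times\mathbb{Q}_{k_2}(\mathbb{R}^n)\times\dots\times\mathbb{Q}_{k_J}(\mathbb{R}^n)$ equipped with the product metric $d\big((X_i)_i,(Y_i)_i\big)=\big(\sum_{i=1}^J\mathcal{G}^2(X_i,Y_i)\big)^{1/2}$.
   Context: $\mathbb{Q}_Q(\mathbb{R}^n)$ denotes the set of unordered $Q$-tuples of points of $\mathbb{R}^n$, written $\sum_{i=1}^Q[[a_i]]$ (two such sums are equal iff the tuples agree up to a permutation; $k[[a]]$ means $k$ copies of $a$), with metric $\mathcal{G}\big(\sum_i[[a_i]],\sum_i[[b_i]]\big)=\min_{\sigma}\big(\sum_{i}|a_i-b_{\sigma(i)}|^2\big)^{1/2}$ over permutations $\sigma$. Signature: every $x$ can be written uniquely as $x=\sum_{i=1}^J k_i[[x_i]]$ with $x_1,\dots,x_J$ distinct and $1\le k_1\le\dots\le k_J$; $S(x):=(J,k_1,\dots,k_J)$. Tangent cone: let $G(A)$ be the set of geodesics issuing from $A$, i.e. curves $\gamma:[0,T_\gamma]\to\mathbb{Q}_Q(\mathbb{R}^n)$ with $\gamma(0)=A$ and $\mathcal{G}(\gamma(s),\gamma(t))=c|t-s|$ for a constant $c\ge0$. For $\gamma_1,\gamma_2\in G(A)$, $d_A(\gamma_1,\gamma_2)=\lim_{t\downarrow0}\mathcal{G}(\gamma_1(t),\gamma_2(t))/t$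 (this limit exists and equals the distance defined via Alexandrov angles). Set $\gamma_1\sim\gamma_2$ if they coincide on some $[0,\epsilon]$, $\epsilon>0$; $d_A$ is a distance on $G(A)/\sim$, and $\mathbf{Tan}_A(\mathbb{Q}_Q(\mathbb{R}^n))$ is the metric completion of $(G(A)/\sim,d_A)$. *)

(* Defs.v *)
From HB Require Import structures.
From mathcomp Require Import all_boot all_order all_algebra all_fingroup.
From mathcomp Require Import all_classical all_reals all_analysis.
Set Implicit Arguments. Unset Strict Implicit. Unset Printing Implicit Defensive.
Import Order.TTheory GRing.Theory Num.Theory numFieldNormedType.Exports.
Local Open Scope classical_set_scope.
Local Open Scope ring_scope.

(* Representatives of Q-points: ordered Q-tuples of points of R^n
   (points of R^n are row vectors 'rV[R]_n). Two representatives denote the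
   same unordered Q-tuple iff they differ by a permutation, iff their
   G-distance is 0. *)
Definition Qpt (R : realType) (Q n : nat) := 'I_Q -> 'rV[R]_n.

Definition Gcost (R : realType) (Q n : nat) (a b : Qpt R Q n) (s : {perm 'I_Q}) : R :=
  \sum_(i < Q) \sum_(j < n) (a i 0 j - b (s i) 0 j) ^+ 2.

Definition Gdist (R : realType) (Q n : nat) (a b : Qpt R Q n) : R :=
  Num.sqrt (\big[Num.min/Gcost a b 1%g]_(s : {perm 'I_Q}) Gcost a b s).

Definition is_signature (R : realType) (Q n : nat) (A : Qpt R Q n)
    (J : nat) (k : 'I_J -> nat) : Prop :=
  exists x : 'I_J -> 'rV[R]_n,
    [/\ injective x,
        (forall i, (0 < k i)%N),
        (forall i j : 'I_J, (i <= j)%N -> (k i <= k j)%N),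
        (forall l : 'I_Q, exists i, A l = x i) &
        (forall i, #|[set l : 'I_Q | A l == x i]| = k i)].

(* geodesics issuing from A: gamma : [0,T] -> Q_Q(R^n), gamma(0) = A,
   G(gamma s, gamma t) = c |t - s|.  The curve is a total function on R;
   only its values on [0,T] matter. *)
Record geodesic (R : realType) (Q n : nat) (A : Qpt R Q n) := Geodesic {
  gT : R;
  gcurve : R -> Qpt R Q n;
  gT_gt0 : 0 < gT;
  gcurve0 : Gdist (gcurve 0) A = 0;
  gspeed : exists c : R, 0 <= c /\
     forall s t, 0 <= s <= gT -> 0 <= t <= gT ->
       Gdist (gcurve s) (gcurve t) = c * `|t - s| }.

Definition dA (R : realType) (Q n : nat) (A : Qpt R Q n) (g1 g2 : geodesic A) : R :=
  lim ((fun t : R => Gdist (gcurve g1 t) (gcurve g2 t) / t) @ 0^'+).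

Definition dA_cauchy (R : realType) (Q n : nat) (A : Qpt R Q n)
    (s : nat -> geodesic A) : Prop :=
  forall e : R, 0 < e -> exists N : nat, forall p q : nat, (N <= p)%N -> (N <= q)%N ->
    dA (s p) (s q) < e.

Definition prodQ (R : realType) (n J : nat) (k : 'I_J -> nat) :=
  forall i : 'I_J, Qpt R (k i) n.

Definition prod_dist (R : realType) (n J : nat) (k : 'I_J -> nat)
    (X Y : prodQ R n k) : R :=
  Num.sqrt (\sum_(i < J) (Gdist (X i) (Y i)) ^+ 2).

(* Main.v *)
Require Import Defs.
From HB Require Import structures.
From mathcomp Require Import all_boot all_order all_algebra all_fingroup.
From mathcomp Require Import all_classical all_reals all_analysis.
From mathcomp Require Import ring lra.
Import Order.TTheory GRing.Theory Num.Theory numFieldNormedType.Exports.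
Local Open Scope classical_set_scope.
Local Open Scope ring_scope.

Lemma Gc_ge0 (R : realType) (Q n : nat) (a b : Qpt R Q n) s : 0 <= Gcost a b s.
Proof. by apply: sumr_ge0 => i _; apply: sumr_ge0 => j _; apply: sqr_ge0. Qed.

Lemma Gd_sq (R : realType) (Q n : nat) (a b : Qpt R Q n) :
  Gdist a b ^+ 2 = \big[Num.min/Gcost a b 1%g]_(s : {perm 'I_Q}) Gcost a b s.
Proof.
rewrite /Gdist sqr_sqrtr //.
elim/big_ind: _ => //; first exact: Gc_ge0.
- by move=> x y hx hy; rewrite /Order.min; case: ifP.
- by move=> s _; apply: Gc_ge0.
Qed.

Lemma Gd_att (R : realType) (Q n : nat) (a b : Qpt R Q n) :
  exists s, Gdist a b ^+ 2 = Gcost a b s.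
Proof.
rewrite Gd_sq; elim/big_ind: _ => //; first by exists 1%g.
- move=> x y [s1 ->] [s2 ->].
  by rewrite /Order.min; case: ifP => _; [exists s1|exists s2].
- by move=> s _; exists s.
Qed.

Lemma Gd_le (R : realType) (Q n : nat) (a b : Qpt R Q n) s :
  Gdist a b ^+ 2 <= Gcost a b s.
Proof. by rewrite Gd_sq; apply: bigmin_le. Qed.


Section QS.
Variables (R : realType) (Q n : nat).
Implicit Types (F G H : 'I_Q -> 'I_n -> R).

Definition qsum F := \sum_(i < Q) \sum_(j < n) F i j.

Lemma qsum_ext F G : (forall i j, F i j = G i j) -> qsum F = qsum G.
Proof. by move=> H; apply: eq_bigr => i _; apply: eq_bigr => j _. Qed.

Lemma qsum_ge0 F : (forall i j, 0 <= F i j) -> 0 <= qsum F.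
Proof. by move=> H; apply: sumr_ge0 => i _; apply: sumr_ge0. Qed.

Lemma qsum_le F G : (forall i j, F i j <= G i j) -> qsum F <= qsum G.
Proof. by move=> H; apply: ler_sum => i _; apply: ler_sum. Qed.

Lemma qsum_lin3 F G H a b c :
  qsum (fun i j => a * F i j + b * G i j + c * H i j)
  = a * qsum F + b * qsum G + c * qsum H.
Proof.
rewrite /qsum !mulr_sumr -!big_split /=; apply: eq_bigr => i _.
by rewrite !mulr_sumr -!big_split.
Qed.

Lemma qsum_eq0 F : (forall i j, 0 <= F i j) -> qsum F = 0 ->
  forall i j, F i j = 0.
Proof.
move=> H0 H i j.
have H1 : \sum_(j < n) F i j = 0.
  by apply: (psumr_eq0P _ H) => // k _; apply: sumr_ge0.
by apply: (psumr_eq0P _ H1).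
Qed.

Lemma qsum_row F i0 : (forall i j, 0 <= F i j) ->
  \sum_(j < n) F i0 j <= qsum F.
Proof.
move=> H; rewrite /qsum (bigD1 i0) //= lerDl.
by apply: sumr_ge0 => i _; apply: sumr_ge0.
Qed.

Lemma qsum_entry F i0 j0 : (forall i j, 0 <= F i j) -> F i0 j0 <= qsum F.
Proof.
move=> H; have := qsum_row F i0 H; apply: le_trans.
by rewrite (bigD1 j0) //= lerDl; apply: sumr_ge0 => k _.
Qed.

Lemma qsum_expand F G a b :
  qsum (fun i j => (a * F i j - b * G i j) ^+ 2) =
  a ^+ 2 * qsum (fun i j => F i j ^+ 2) + b ^+ 2 * qsum (fun i j => G i j ^+ 2)
  + (- 2 * a * b) * qsum (fun i j => F i j * G i j).
Proof.
rewrite -qsum_lin3; apply: qsum_ext => i j; ring.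
Qed.

Lemma qsum_cs F G :
  qsum (fun i j => F i j * G i j) <=
  Num.sqrt (qsum (fun i j => F i j ^+ 2)) * Num.sqrt (qsum (fun i j => G i j ^+ 2)).
Proof.
set X := Num.sqrt _; set Y := Num.sqrt _; set S := qsum _.
have F0 : 0 <= qsum (fun i j => F i j ^+ 2) by apply: qsum_ge0 => *; apply: sqr_ge0.
have G0 : 0 <= qsum (fun i j => G i j ^+ 2) by apply: qsum_ge0 => *; apply: sqr_ge0.
have X2 : X ^+ 2 = qsum (fun i j => F i j ^+ 2) by rewrite sqr_sqrtr.
have Y2 : Y ^+ 2 = qsum (fun i j => G i j ^+ 2) by rewrite sqr_sqrtr.
have X0 : 0 <= X by apply: sqrtr_ge0.
have Y0 : 0 <= Y by apply: sqrtr_ge0.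
have E := qsum_expand F G Y X.
have E0 : 0 <= qsum (fun i j => (Y * F i j - X * G i j) ^+ 2).
  by apply: qsum_ge0 => *; apply: sqr_ge0.
rewrite E -X2 -Y2 -/S in E0.
have [XY0|XY0] := eqVneq (X * Y) 0.
  move/eqP: XY0; rewrite mulf_eq0 => /orP[] /eqP Z.
  - have Fz : forall i j, F i j = 0.
      move=> i j; apply/eqP; rewrite -sqrf_eq0; apply/eqP.
      apply: (qsum_eq0 (fun i j => F i j ^+ 2)) => //.
        by move=> *; apply: sqr_ge0.
      by rewrite -X2 Z expr0n.
    rewrite Z mul0r /S /qsum big1 // => i _; rewrite big1 // => j _.
    by rewrite Fz mul0r.
  - have Gz : forall i j, G i j = 0.
      move=> i j; apply/eqP; rewrite -sqrf_eq0; apply/eqP.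
      apply: (qsum_eq0 (fun i j => G i j ^+ 2)) => //.
        by move=> *; apply: sqr_ge0.
      by rewrite -Y2 Z expr0n.
    rewrite Z mulr0 /S /qsum big1 // => i _; rewrite big1 // => j _.
    by rewrite Gz mulr0.
have XYp : 0 < X * Y by rewrite lt_def XY0 mulr_ge0.
have : 0 <= X * Y * (X * Y - S) by nra.
by rewrite pmulr_rge0 // subr_ge0.
Qed.

Lemma qsum_mink F G :
  Num.sqrt (qsum (fun i j => (F i j + G i j) ^+ 2)) <=
  Num.sqrt (qsum (fun i j => F i j ^+ 2)) + Num.sqrt (qsum (fun i j => G i j ^+ 2)).
Proof.
have := qsum_cs F G.
have E : qsum (fun i j => (F i j + G i j) ^+ 2) =
   qsum (fun i j => F i j ^+ 2) + qsum (fun i j => G i j ^+ 2) + 2 * qsum (fun i j => F i j * G i j).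
  rewrite -[qsum (fun i j => F i j ^+ 2)]mul1r -[qsum (fun i j => G i j ^+ 2)]mul1r.
  by rewrite -qsum_lin3; apply: qsum_ext => i j; ring.
have F0 : 0 <= qsum (fun i j => F i j ^+ 2) by apply: qsum_ge0 => *; apply: sqr_ge0.
have G0 : 0 <= qsum (fun i j => G i j ^+ 2) by apply: qsum_ge0 => *; apply: sqr_ge0.
have FG0 : 0 <= qsum (fun i j => (F i j + G i j) ^+ 2) by apply: qsum_ge0 => *; apply: sqr_ge0.
move=> cs.
have X0 := sqrtr_ge0 (qsum (fun i j => F i j ^+ 2)).
have Y0 := sqrtr_ge0 (qsum (fun i j => G i j ^+ 2)).
set X := Num.sqrt (qsum (fun i j => F i j ^+ 2)) in cs X0 *.
set Y := Num.sqrt (qsum (fun i j => G i j ^+ 2)) in cs Y0 *.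
have -> : X + Y = Num.sqrt ((X + Y) ^+ 2) by rewrite sqrtr_sqr ger0_norm // addr_ge0.
rewrite ler_sqrt ?sqr_ge0 // E -(sqr_sqrtr F0) -(sqr_sqrtr G0) -/X -/Y.
nra.
Qed.

Notation Qp := (Qpt R Q n).
Notation perm := {perm 'I_Q}.
Implicit Types (a b c u w : Qp) (P : pred perm).

Definition mnP P a b := \big[Num.min/Gcost a b 1%g]_(s | P s) Gcost a b s.
Definition mnd P a b := Num.sqrt (mnP P a b).

Lemma GdistE a b : Gdist a b = mnd xpredT a b.
Proof. by []. Qed.

Lemma GcostE a b s : Gcost a b s = qsum (fun i j => (a i 0 j - b (s i) 0 j) ^+ 2).
Proof. by []. Qed.

Lemma Gcost_ge0 a b s : 0 <= Gcost a b s.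
Proof. by apply: qsum_ge0 => *; apply: sqr_ge0. Qed.

Lemma mn_att P a b : P 1%g -> exists2 s, P s & mnP P a b = Gcost a b s.
Proof.
move=> P1; rewrite /mnP.
elim/big_ind: _ => //; first by exists 1%g.
- move=> x y [s1 Ps1 ->] [s2 Ps2 ->].
  by rewrite /Order.min; case: ifP => _; [exists s1|exists s2].
- by move=> s Ps; exists s.
Qed.

Lemma mn_le P a b s : P s -> mnP P a b <= Gcost a b s.
Proof. by move=> Ps; apply: bigmin_le_cond. Qed.

Lemma mn_ge0 P a b : P 1%g -> 0 <= mnP P a b.
Proof. by move=> P1; have [s _ ->] := mn_att P a b P1; apply: Gcost_ge0. Qed.

Definition grp P := [/\ P 1%g, forall s t, P s -> P t -> P (s * t)%g &
   forall s, P s -> P (s^-1)%g].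

Lemma reindex_perm (F : 'I_Q -> R) (s : perm) : \sum_i F i = \sum_i F (s i).
Proof. exact: (reindex_inj (@perm_inj _ s)). Qed.

Lemma Gcost_sym a b s : Gcost a b s = Gcost b a s^-1%g.
Proof.
rewrite /Gcost (reindex_perm _ s^-1%g); apply: eq_bigr => i _.
by apply: eq_bigr => j _; rewrite permKV; ring.
Qed.

Lemma mn_sym P a b : grp P -> mnP P a b = mnP P b a.
Proof.
move=> [P1 PM PV].
have H : forall a b, mnP P a b <= mnP P b a.
  move=> x y; have [s Ps ->] := mn_att P y x P1.
  by rewrite Gcost_sym; apply: mn_le; apply: PV.
by apply/eqP; rewrite eq_le !H.
Qed.

Lemma mnd_sym P a b : grp P -> mnd P a b = mnd P b a.
Proof. by move=> g; rewrite /mnd mn_sym. Qed.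

Lemma mnd_ge0 P a b : 0 <= mnd P a b.
Proof. exact: sqrtr_ge0. Qed.

Lemma Gcost_tri a b c s1 s2 :
  Num.sqrt (Gcost a c (s1 * s2)%g) <=
  Num.sqrt (Gcost a b s1) + Num.sqrt (Gcost b c s2).
Proof.
have := qsum_mink (fun i j => a i 0 j - b (s1 i) 0 j)
                  (fun i j => b (s1 i) 0 j - c (s2 (s1 i)) 0 j).
have -> : qsum (fun i j => (a i 0 j - b (s1 i) 0 j + (b (s1 i) 0 j - c (s2 (s1 i)) 0 j)) ^+ 2)
   = Gcost a c (s1 * s2)%g.
  by rewrite GcostE; apply: qsum_ext => i j; rewrite permM; congr (_ ^+ 2); ring.
have -> : qsum (fun i j => (b (s1 i) 0 j - c (s2 (s1 i)) 0 j) ^+ 2) = Gcost b c s2.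
  by rewrite /Gcost /qsum [RHS](reindex_perm _ s1).
by [].
Qed.

Lemma mnd_tri P a b c : grp P -> mnd P a c <= mnd P a b + mnd P b c.
Proof.
move=> [P1 PM PV].
have [s1 Ps1 E1] := mn_att P a b P1; have [s2 Ps2 E2] := mn_att P b c P1.
rewrite /mnd E1 E2; apply: le_trans (Gcost_tri _ _ _ _ _).
by rewrite ler_sqrt ?Gcost_ge0 //; apply: mn_le; apply: PM.
Qed.

Lemma mnd_refl P a : P 1%g -> mnd P a a = 0.
Proof.
move=> P1; apply/eqP; rewrite /mnd sqrtr_eq0.
apply: le_trans (mn_le P _ _ _ P1) _.
by rewrite /Gcost /qsum big1 // => i _; rewrite big1 // => j _; rewrite perm1 subrr expr0n.
Qed.

Definition qcomp a (s : perm) : Qp := fun i => a (s i).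
Definition qadd a b : Qp := fun i => a i + b i.
Definition qscale (c : R) a : Qp := fun i => c *: a i.

Lemma mnd_comp0 P a s : P 1%g -> P s -> mnd P (qcomp a s) a = 0.
Proof.
move=> P1 Ps; apply/eqP; rewrite /mnd sqrtr_eq0.
apply: le_trans (mn_le P _ _ _ Ps) _.
by rewrite /Gcost /qsum big1 // => i _; rewrite big1 // => j _; rewrite /qcomp subrr expr0n.
Qed.

Lemma mnd_0l P a b c : grp P -> mnd P a b = 0 -> mnd P a c = mnd P b c.
Proof.
move=> g H; apply/eqP; rewrite eq_le.
have := mnd_tri P a b c g; have := mnd_tri P b a c g.
rewrite (mnd_sym P b a g) H !add0r => -> ->; by [].
Qed.

Lemma mnd_0r P a b c : grp P -> mnd P b c = 0 -> mnd P a b = mnd P a c.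
Proof.
move=> g H; rewrite (mnd_sym P a b g) (mnd_sym P a c g); exact: mnd_0l.
Qed.

Lemma Gcost_scale (c : R) a b s : Gcost (qscale c a) (qscale c b) s = c ^+ 2 * Gcost a b s.
Proof.
rewrite /Gcost /qsum mulr_sumr; apply: eq_bigr => i _; rewrite mulr_sumr.
by apply: eq_bigr => j _; rewrite /qscale !mxE; ring.
Qed.

Lemma mn_scale P (c : R) a b : P 1%g -> mnP P (qscale c a) (qscale c b) = c ^+ 2 * mnP P a b.
Proof.
move=> P1; apply/eqP; rewrite eq_le; apply/andP; split.
  have [s Ps ->] := mn_att P a b P1; rewrite -Gcost_scale; exact: mn_le.
have [s Ps ->] := mn_att P (qscale c a) (qscale c b) P1.
by rewrite Gcost_scale ler_wpM2l ?sqr_ge0 // mn_le.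
Qed.

Lemma mnd_scale P (c : R) a b : P 1%g -> 0 <= c ->
  mnd P (qscale c a) (qscale c b) = c * mnd P a b.
Proof.
by move=> P1 c0; rewrite /mnd mn_scale // sqrtrM ?sqr_ge0 // sqrtr_sqr ger0_norm.
Qed.


Section Clusters.
Variable A : Qp.

Definition stab (s : perm) : bool := [forall l, A (s l) == A l].

Lemma grp_stab : grp stab.
Proof.
split.
- by apply/forallP => l; rewrite perm1.
- move=> s t /forallP Hs /forallP Ht; apply/forallP => l.
  by rewrite permM (eqP (Ht _)) (eqP (Hs _)).
- move=> s /forallP Hs; apply/forallP => l.
  by have := Hs (s^-1 l)%g; rewrite permKV eq_sym.
Qed.

Lemma stab1 : stab 1%g. Proof. by case: grp_stab. Qed.

Lemma grpT : grp (xpredT : pred perm).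
Proof. by []. Qed.

Definition dS := mnd stab.

Definition rsq (l l' : 'I_Q) := \sum_(j < n) (A l 0 j - A l' 0 j) ^+ 2.

Definition D2 := \big[Num.min/1]_(p : 'I_Q * 'I_Q | A p.1 != A p.2) rsq p.1 p.2.

Lemma D2_gt0 : 0 < D2.
Proof.
apply: lt_bigmin => // p Hp.
rewrite lt_def sumr_ge0 ?andbT; last by move=> j _; apply: sqr_ge0.
apply/eqP => H0; move/negP: Hp; apply; apply/eqP/rowP => j.
have : (A p.1 0 j - A p.2 0 j) ^+ 2 = 0.
  by apply: (psumr_eq0P _ H0) => // k _; apply: sqr_ge0.
by move/eqP; rewrite sqrf_eq0 subr_eq0 => /eqP.
Qed.

Lemma D2_le l l' : A l != A l' -> D2 <= rsq l l'.
Proof. by move=> H; apply: (@bigmin_le_cond _ _ _ _ (l, l')). Qed.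

Definition sqn (u : Qp) := qsum (fun i j => u i 0 j ^+ 2).

Lemma sqn_ge0 u : 0 <= sqn u.
Proof. by apply: qsum_ge0 => *; apply: sqr_ge0. Qed.

Lemma sum3 (F G H : 'I_n -> R) x y z :
  \sum_(j < n) (x * F j + y * G j + z * H j) =
  x * \sum_j F j + y * \sum_j G j + z * \sum_j H j.
Proof. by rewrite !mulr_sumr -!big_split. Qed.

Lemma Gcost_stab u w s : stab s ->
  Gcost (qadd A u) (qadd A w) s = Gcost u w s.
Proof.
move=> /forallP Hs; rewrite !GcostE; apply: qsum_ext => i j.
by rewrite /qadd !mxE (eqP (Hs i)); congr (_ ^+ 2); ring.
Qed.

Lemma stab_of_small u w s : sqn u < D2 / 16 -> sqn w < D2 / 16 ->
  Gcost (qadd A u) (qadd A w) s <= Gcost (qadd A u) (qadd A w) 1%g -> stab s.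
Proof.
move=> hu hw hs; apply/negPn/negP => /forallPn [l Hl].
have D0 := D2_gt0.
have H1 : Gcost (qadd A u) (qadd A w) 1%g <= 2 * sqn u + 2 * sqn w
     + 0 * qsum (fun _ _ => 0).
  rewrite /sqn -qsum_lin3 GcostE; apply: qsum_le => i j.
  rewrite /qadd !mxE perm1.
  have := sqr_ge0 (u i 0 j + w i 0 j); nra.
rewrite mul0r addr0 in H1.
have Hd : D2 <= rsq l (s l) by apply: D2_le; rewrite eq_sym.
have H2 : \sum_(j < n) ((qadd A u) l 0 j - (qadd A w) (s l) 0 j) ^+ 2 <=
          Gcost (qadd A u) (qadd A w) s.
  by rewrite GcostE; apply: (qsum_row (fun i j => _ ^+ 2)) => *; apply: sqr_ge0.
have Hu : \sum_(j < n) u l 0 j ^+ 2 <= sqn u.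
  by apply: (qsum_row (fun i j => u i 0 j ^+ 2)) => *; apply: sqr_ge0.
have Hw : \sum_(j < n) w (s l) 0 j ^+ 2 <= sqn w.
  by apply: (qsum_row (fun i j => w i 0 j ^+ 2)) => *; apply: sqr_ge0.
have H3 : (1/2) * rsq l (s l) + (-2) * \sum_(j < n) u l 0 j ^+ 2
          + (-2) * \sum_(j < n) w (s l) 0 j ^+ 2 <=
          \sum_(j < n) ((qadd A u) l 0 j - (qadd A w) (s l) 0 j) ^+ 2.
  rewrite /rsq -sum3; apply: ler_sum => j _; rewrite /qadd !mxE.
  have := sqr_ge0 (A l 0 j - A (s l) 0 j + 2 * (u l 0 j - w (s l) 0 j)).
  have := sqr_ge0 (u l 0 j + w (s l) 0 j).
  nra.
lra.
Qed.

Lemma loc_eq u w : sqn u < D2 / 16 -> sqn w < D2 / 16 ->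
  exists2 s, stab s & mnP xpredT (qadd A u) (qadd A w) = Gcost u w s /\
                      mnP stab u w = Gcost u w s.
Proof.
move=> hu hw.
have [s0 _ E0] := mn_att xpredT (qadd A u) (qadd A w) isT.
have st0 : stab s0.
  apply: (stab_of_small u w s0 hu hw); rewrite -E0; exact: mn_le.
exists s0 => //; rewrite E0 Gcost_stab //; split => //.
apply/eqP; rewrite eq_le mn_le //=.
have [s1 st1 ->] := mn_att stab u w stab1.
rewrite -(Gcost_stab u w s0 st0) -(Gcost_stab u w s1 st1) -E0; exact: mn_le.
Qed.

Lemma Gdist_loc u w : sqn u < D2 / 16 -> sqn w < D2 / 16 ->
  Gdist (qadd A u) (qadd A w) = dS u w.
Proof.
move=> hu hw; have [s _ [E1 E2]] := loc_eq u w hu hw.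
by rewrite GdistE /mnd /dS /mnd E1 E2.
Qed.

Definition eps := Num.sqrt D2 / 8.

Lemma eps_gt0 : 0 < eps.
Proof. by rewrite /eps divr_gt0 // sqrtr_gt0 D2_gt0. Qed.

Lemma small_of x : 0 <= x -> x <= eps -> x ^+ 2 < D2 / 16.
Proof.
move=> x0 xe; have D0 := D2_gt0.
have E : eps ^+ 2 = D2 / 64.
  by rewrite /eps expr_div_n sqr_sqrtr ?(ltW D0) //; congr (_ / _); rewrite -natrX.
have : x ^+ 2 <= eps ^+ 2 by rewrite ler_sqr ?nnegrE // (le_trans x0 xe).
rewrite E; lra.
Qed.

Lemma sqn_scale t u : sqn (qscale t u) = t ^+ 2 * sqn u.
Proof.
rewrite /sqn /qsum mulr_sumr; apply: eq_bigr => i _; rewrite mulr_sumr.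
by apply: eq_bigr => j _; rewrite /qscale !mxE; ring.
Qed.

Lemma Gdist_ge0 a b : 0 <= Gdist a b.
Proof. exact: sqrtr_ge0. Qed.

Lemma Gdist_sq a b : Gdist a b ^+ 2 = mnP xpredT a b.
Proof. by rewrite GdistE /mnd sqr_sqrtr // mn_ge0. Qed.

Lemma rep (P : Qp) : exists2 u, sqn u = Gdist A P ^+ 2 & Gdist (qadd A u) P = 0.
Proof.
have [s _ E] := mn_att xpredT A P isT.
exists (fun i => P (s i) - A i).
  rewrite Gdist_sq E GcostE /sqn; apply: qsum_ext => i j; rewrite !mxE; ring.
have -> : qadd A (fun i => P (s i) - A i) = qcomp P s.
  by apply: funext => i; rewrite /qadd addrC subrK.
by rewrite GdistE mnd_comp0.
Qed.

Lemma classify (g : geodesic A) : exists V : Qp, exists t0 : R, 0 < t0 /\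
  forall t, 0 < t -> t <= t0 -> Gdist (gcurve g t) (qadd A (qscale t V)) = 0.
Proof.
case: g => T gam T0 g0 [c [c0 sp]] /=.
have e0 := eps_gt0.
set e1 := eps / (c + 1).
have e1p : 0 < e1 by rewrite divr_gt0 // ltr_wpDl.
have e1E : e1 * (c + 1) = eps by rewrite /e1 divfK // gt_eqF // ltr_wpDl.
set t0 := Num.min T e1.
have t0p : 0 < t0 by rewrite lt_min T0 e1p.
have t0T : t0 <= T by rewrite ge_min lexx.
have t0e : t0 <= e1 by rewrite ge_min lexx orbT.
have ct0 : c * t0 <= eps by nra.
have dist0 : forall t, 0 <= t -> t <= T -> Gdist (gam t) A = c * t.
  move=> t h1 h2.
  rewrite GdistE -(mnd_0r _ (gam t) _ _ grpT g0) -GdistE sp ?h1 ?h2 ?lexx ?(ltW T0) //.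
  by rewrite sub0r normrN ger0_norm.
have [w hw1 hw2] := rep (gam t0).
exists (qscale t0^-1 w), t0; split => // t tp tt0.
have [u hu1 hu2] := rep (gam t).
have GA : forall x, 0 <= x -> x <= T -> Gdist A (gam x) = c * x.
  by move=> x h1 h2; rewrite GdistE mnd_sym // -GdistE dist0.
rewrite GA ?(ltW tp) ?(le_trans tt0) // in hu1.
rewrite GA ?(ltW t0p) // in hw1.
have su : sqn u < D2 / 16 by rewrite hu1; apply: small_of; nra.
have sw : sqn w < D2 / 16 by rewrite hw1; apply: small_of; nra.
have [sg stsg [E1 _]] := loc_eq u w su sw.
have Duw : Gdist (qadd A u) (qadd A w) = c * (t0 - t).
  rewrite GdistE (mnd_0l _ _ _ _ grpT hu2) mnd_sym // (mnd_0l _ _ _ _ grpT hw2).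
  rewrite -GdistE sp ?(ltW tp) ?(ltW t0p) ?t0T ?(le_trans tt0) //.
  by rewrite distrC ger0_norm ?subr_ge0.
have Cs : Gcost u w sg = (c * (t0 - t)) ^+ 2 by rewrite -E1 -Gdist_sq Duw.
pose a := fun i j => u i 0 j; pose b := fun i j => w (sg i) 0 j.
have Ha : qsum (fun i j => a i j ^+ 2) = (c * t) ^+ 2 by rewrite -hu1.
have Hb : qsum (fun i j => b i j ^+ 2) = (c * t0) ^+ 2.
  by rewrite -hw1 /sqn /qsum [RHS](reindex_perm _ sg).
have Hab : qsum (fun i j => (1 * a i j - 1 * b i j) ^+ 2) = (c * (t0 - t)) ^+ 2.
  by rewrite -Cs GcostE; apply: qsum_ext => i j; rewrite !mul1r.
have X1 := qsum_expand a b 1 1.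
have X2 := qsum_expand a b t0 t.
rewrite Hab Ha Hb in X1; rewrite Ha Hb in X2.
have Z : qsum (fun i j => (t0 * a i j - t * b i j) ^+ 2) = 0.
  rewrite X2; set S := qsum _ in X1 *.
  have HS : S = c ^+ 2 * t * t0 by nra.
  rewrite HS; ring.
have Zij : forall i j, t0 * a i j - t * b i j = 0.
  move=> i j; apply/eqP; rewrite -sqrf_eq0; apply/eqP.
  by apply: (qsum_eq0 (fun i j => (t0 * a i j - t * b i j) ^+ 2)) => // *; apply: sqr_ge0.
have t0n : t0 != 0 by rewrite gt_eqF.
have Eq : qadd A u = qcomp (qadd A (qscale t (qscale t0^-1 w))) sg.
  apply: funext => i; apply/rowP => j; rewrite /qadd /qcomp /qscale !mxE.
  move/forallP: stsg => /(_ i) /eqP ->; congr (_ + _).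
  have := Zij i j; rewrite /a /b => /eqP; rewrite subr_eq0 => /eqP h.
  by rewrite mulrA (mulrC t) -mulrA -h mulKf.
rewrite GdistE -(mnd_0l _ _ _ _ grpT hu2) Eq.
exact: mnd_comp0.
Qed.

Definition dir (g : geodesic A) : Qp := projT1 (cid (classify g)).

Lemma dir_spec (g : geodesic A) : exists t0 : R, 0 < t0 /\
  forall t, 0 < t -> t <= t0 -> Gdist (gcurve g t) (qadd A (qscale t (dir g))) = 0.
Proof. exact: (projT2 (cid (classify g))). Qed.

Lemma lim_right_cst (f : R -> R) (c tau : R) :
  0 < tau -> (forall t, 0 < t -> t <= tau -> f t = c) ->
  lim (f @ 0^'+) = c.
Proof.
move=> tau0 H; apply: cvg_lim => //.
apply: cvg_near_cst.
near=> t; apply: H; near: t.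
  exact: nbhs_right_gt.
exact: nbhs_right_le.
Unshelve. all: by end_near.
Qed.

Lemma small_scale t V nu : 0 <= t -> Num.sqrt (sqn V) <= nu -> t * nu <= eps ->
  sqn (qscale t V) < D2 / 16.
Proof.
move=> t0 hn hte; rewrite sqn_scale -(sqr_sqrtr (sqn_ge0 V)) -exprMn.
apply: small_of; first by rewrite mulr_ge0 // sqrtr_ge0.
apply: le_trans hte; exact: ler_wpM2l.
Qed.

Lemma dA_eq (g1 g2 : geodesic A) : dA g1 g2 = dS (dir g1) (dir g2).
Proof.
have [t1 [t1p H1]] := dir_spec g1; have [t2 [t2p H2]] := dir_spec g2.
set V1 := dir g1 in H1 *; set V2 := dir g2 in H2 *.
set nu := Num.sqrt (sqn V1) + Num.sqrt (sqn V2) + 1.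
have s1 := sqrtr_ge0 (sqn V1); have s2 := sqrtr_ge0 (sqn V2).
have nup : 0 < nu by rewrite /nu; lra.
have e0 := eps_gt0.
set tau := Num.min t1 (Num.min t2 (eps / nu)).
have taup : 0 < tau by rewrite !lt_min t1p t2p divr_gt0.
rewrite /dA; apply: (lim_right_cst _ _ _ taup) => t tp ttau.
have tt1 : t <= t1 by move: ttau; rewrite !le_min => /andP[].
have tt2 : t <= t2 by move: ttau; rewrite !le_min => /andP[_ /andP[]].
have tte : t <= eps / nu by move: ttau; rewrite !le_min => /andP[_ /andP[]].
have tnu : t * nu <= eps by rewrite -ler_pdivlMr.
have sm1 : sqn (qscale t V1) < D2 / 16.
  by apply: (small_scale _ _ nu); rewrite ?(ltW tp) //; rewrite /nu; lra.
have sm2 : sqn (qscale t V2) < D2 / 16.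
  by apply: (small_scale _ _ nu); rewrite ?(ltW tp) //; rewrite /nu; lra.
rewrite GdistE (mnd_0l _ _ _ _ grpT (H1 t tp tt1)) (mnd_0r _ _ _ _ grpT (H2 t tp tt2)).
rewrite -GdistE Gdist_loc // /dS mnd_scale ?stab1 ?(ltW tp) //.
by rewrite mulrC mulKf // gt_eqF.
Qed.

Definition ee (r : nat) : R := (2 ^+ r)^-1.

Lemma ee_gt0 r : 0 < ee r.
Proof. by rewrite /ee invr_gt0 exprn_gt0. Qed.

Lemma eeS r : ee r.+1 * 2 = ee r.
Proof. by rewrite /ee exprS invfM mulrAC mulVf ?mul1r // pnatr_eq0. Qed.

Lemma ee0 : ee 0 = 1.
Proof. by rewrite /ee expr0 invr1. Qed.

Lemma ee_mul r : ee r * 2 ^+ r = 1.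
Proof. by rewrite /ee mulVf // expf_neq0 // pnatr_eq0. Qed.

Definition optS u w : perm := projT1 (cid2 (mn_att stab u w stab1)).

Lemma optS_spec u w : stab (optS u w) /\ mnP stab u w = Gcost u w (optS u w).
Proof. by rewrite /optS; case: (cid2 _) => s h1 h2. Qed.

Fixpoint realign (Z : nat -> Qp) (j : nat) : Qp :=
  match j with
  | 0 => Z 0%N
  | j'.+1 => qcomp (Z j'.+1) (optS (realign Z j') (Z j'.+1))
  end.

Lemma realign0 Z j : dS (realign Z j) (Z j) = 0.
Proof.
case: j => [|j] /=; first exact: mnd_refl stab1.
exact: (mnd_comp0 _ _ _ stab1 (optS_spec _ _).1).
Qed.

Lemma realign_step Z j (x : 'I_Q) (k : 'I_n) :
  `|realign Z j x 0 k - realign Z j.+1 x 0 k| <= dS (Z j) (Z j.+1).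
Proof.
have E : dS (realign Z j) (Z j.+1) = dS (Z j) (Z j.+1).
  exact: (mnd_0l _ _ _ _ grp_stab (realign0 Z j)).
rewrite -E /dS /mnd (optS_spec _ _).2 GcostE /=.
set F := fun i k0 => _.
have H : F x k <= qsum F.
  by apply: qsum_entry => *; apply: sqr_ge0.
rewrite -sqrtr_sqr ler_sqrt; last by apply: qsum_ge0 => *; apply: sqr_ge0.
exact: H.
Qed.

Lemma realign_bound Z : (forall j, dS (Z j) (Z j.+1) <= ee j) ->
  forall x k p q, (p <= q)%N ->
  `|realign Z p x 0 k - realign Z q x 0 k| <= 2 * ee p.
Proof.
move=> HZ x k p q pq.
have H : forall d, `|realign Z p x 0 k - realign Z (p + d) x 0 k| <= 2 * ee p - 2 * ee (p + d).
  elim=> [|d IH]; first by rewrite addn0 !subrr normr0.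
  have T := ler_distD (realign Z (p + d) x 0 k) (realign Z p x 0 k) (realign Z (p + d).+1 x 0 k).
  have S := realign_step Z (p + d) x k.
  have := HZ (p + d); have := eeS (p + d).
  rewrite addnS; lra.
have := H (q - p)%N; rewrite subnKC //.
have := ee_gt0 q; lra.
Qed.

Lemma seq_lim (b : nat -> R) : (forall p q, (p <= q)%N -> `|b p - b q| <= 2 * ee p) ->
  exists l, forall r, `|b r - l| <= 2 * ee r.
Proof.
move=> Hb.
pose E := range (fun q => b q - 2 * ee q).
have ubE : ubound E (b 0%N + 2).
  move=> y [q _ <-]; have := Hb 0%N q isT; rewrite ee0 ler_norml => /andP[h1 h2].
  have := ee_gt0 q; lra.
have hasE : has_ubound E by exists (b 0%N + 2).
have neE : E !=set0 by exists (b 0%N - 2 * ee 0); exists 0%N.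
exists (sup E) => r.
have low : b r - 2 * ee r <= sup E by apply: ub_le_sup => //; exists r.
have up : sup E <= b r + 2 * ee r.
  apply: ge_sup => // y [q _ <-].
  have [rq|qr] := leqP r q.
    have := Hb r q rq; rewrite ler_norml => /andP[h1 h2].
    have := ee_gt0 q; lra.
  have := Hb q r (ltnW qr); rewrite ler_norml => /andP[h1 h2].
  have := ee_gt0 r; lra.
rewrite ler_norml; apply/andP; split; lra.
Qed.

Lemma qsumZ (F : 'I_Q -> 'I_n -> R) (c : R) : qsum (fun i j => c * F i j) = c * qsum F.
Proof.
rewrite /qsum mulr_sumr; apply: eq_bigr => i _; by rewrite mulr_sumr.
Qed.

Lemma dS_complete (W : nat -> Qp) :
  (forall e, 0 < e -> exists N, forall p q, (N <= p)%N -> (N <= q)%N -> dS (W p) (W q) < e) ->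
  exists L, forall e, 0 < e -> exists N, forall m, (N <= m)%N -> dS (W m) L < e.
Proof.
move=> HW.
pose N j := projT1 (cid (HW (ee j) (ee_gt0 j))).
have HN : forall j p q, (N j <= p)%N -> (N j <= q)%N -> dS (W p) (W q) < ee j.
  move=> j; exact: (projT2 (cid (HW (ee j) (ee_gt0 j)))).
pose M j := (\sum_(i < j.+1) N i)%N.
have NM j : (N j <= M j)%N by rewrite /M big_ord_recr /= leq_addl.
have MS j : (M j <= M j.+1)%N by rewrite /M [in X in (_ <= X)%N]big_ord_recr /= leq_addr.
pose Z j := W (M j).
have HZ j : dS (Z j) (Z j.+1) <= ee j.
  exact: ltW (HN j _ _ (NM j) (leq_trans (NM j) (MS j))).
pose B := realign Z.
have Hb := realign_bound Z HZ.
have lims : forall x k, exists l, forall r, `|B r x 0 k - l| <= 2 * ee r.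
  by move=> x k; apply: seq_lim => p q; apply: Hb.
pose lf x k := projT1 (cid (lims x k)).
have Hlf : forall x k r, `|B r x 0 k - lf x k| <= 2 * ee r.
  by move=> x k; exact: (projT2 (cid (lims x k))).
pose L : Qp := fun x => \row_k lf x k.
exists L => e e0.
set K := qsum (fun (_ : 'I_Q) (_ : 'I_n) => (1 : R)).
have K0 : 0 <= K by apply: qsum_ge0.
have sK := sqrtr_ge0 K.
set C := 1 + 2 * Num.sqrt K.
have C0 : 0 < C by rewrite /C; lra.
have BL : forall j, dS (B j) L <= 2 * ee j * Num.sqrt K.
  move=> j; apply: (@le_trans _ _ (Num.sqrt (Gcost (B j) L 1%g))).
    by rewrite ler_sqrt ?Gcost_ge0 //; apply: mn_le; exact: stab1.
  have -> : 2 * ee j * Num.sqrt K = Num.sqrt ((2 * ee j) ^+ 2 * K).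
    by rewrite sqrtrM ?sqr_ge0 // sqrtr_sqr ger0_norm // mulr_ge0 // ltW // ee_gt0.
  rewrite ler_sqrt; last by rewrite mulr_ge0 // sqr_ge0.
  rewrite /K -qsumZ GcostE; apply: qsum_le => x k.
  rewrite /L perm1 mxE mulr1.
  have := Hlf x k j; rewrite ler_norml => /andP[h1 h2]; nra.
have [j hj] : exists j, ee j * C < e.
  have Ce0 : 0 <= C / e by rewrite divr_ge0 // ltW.
  have h := archi_boundP Ce0.
  set m := Num.Def.archi_bound _ in h.
  exists m.
  have h2 : (m%:R : R) < 2 ^+ m by rewrite -natrX ltr_nat ltn_expl.
  have h3 : C < 2 ^+ m * e by rewrite -ltr_pdivrMr //; lra.
  have := ee_mul m; have := ee_gt0 m; nra.
exists (M j) => m hm.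
have T := mnd_tri stab (W m) (Z j) L grp_stab.
have T1 : dS (W m) (Z j) < ee j.
  exact: HN j m (M j) (leq_trans (NM j) hm) (NM j).
have T2 : dS (Z j) L = dS (B j) L.
  by rewrite /dS (mnd_0l _ _ _ _ grp_stab (realign0 Z j)).
have := BL j; rewrite -T2.
rewrite /dS in T1 T2 *.
have := ee_gt0 j.
rewrite /C in hj; nra.
Qed.

Section Sig.
Variables (J : nat) (k : 'I_J -> nat) (x : 'I_J -> 'rV[R]_n).
Hypotheses (hx : injective x) (hk : forall i, (0 < k i)%N)
  (hcov : forall l, exists i, A l = x i)
  (hcard : forall i, #|[set l : 'I_Q | A l == x i]| = k i).

Definition cl (l : 'I_Q) : 'I_J := projT1 (cid (hcov l)).
Lemma clP l : A l = x (cl l).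
Proof. exact: (projT2 (cid (hcov l))). Qed.

Definition Lset i := [set l : 'I_Q | A l == x i].

Definition e i (j : 'I_(k i)) : 'I_Q :=
  @enum_val _ (mem (Lset i)) (cast_ord (esym (hcard i)) j).

Lemma e_in i j : A (e i j) = x i.
Proof.
apply/eqP; have := @enum_valP _ (mem (Lset i)) (cast_ord (esym (hcard i)) j).
by rewrite /e inE.
Qed.

Lemma e_inj i : injective (e i).
Proof. by move=> j1 j2 /enum_val_inj /cast_ord_inj. Qed.

Lemma cl_e i j : cl (e i j) = i.
Proof. by apply: hx; rewrite -clP e_in. Qed.

Definition r i (l : 'I_Q) : 'I_(k i) :=
  if [pick j | e i j == l] is Some j then j else Ordinal (hk i).

Lemma e_r i l : cl l = i -> e i (r i l) = l.
Proof.
move=> cli; rewrite /r; case: pickP => [j /eqP //|H].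
exfalso.
have hc : #|[set l | A l == x i]%SET| = k i.
  rewrite -hcard; apply: eq_card => y; rewrite !inE.
  by apply/idP/idP => [h|/set_mem //]; apply: mem_set.
have Im : [set e i j | j : 'I_(k i)]%SET = [set l | A l == x i]%SET.
  apply/eqP; rewrite eqEcard; apply/andP; split.
    by apply/fintype.subsetP => y /imsetP [j _ ->]; rewrite inE e_in.
  by rewrite card_imset ?cardsT ?card_ord ?hc //; exact: e_inj.
have : l \in [set l | A l == x i]%SET by rewrite inE clP cli.
rewrite -Im => /imsetP [j _ hj].
by have := H j; rewrite hj eqxx.
Qed.

Lemma r_e i j : r i (e i j) = j.
Proof. by apply: (@e_inj i); rewrite e_r // cl_e. Qed.

Lemma sum_part (g : 'I_Q -> R) : \sum_l g l = \sum_(i < J) \sum_(j < k i) g (e i j).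
Proof.
rewrite (partition_big cl xpredT) //=; apply: eq_bigr => i _.
rewrite (reindex_onto (e i) (r i)) /=; last by move=> l /eqP; apply: e_r.
by apply: eq_bigl => j; rewrite cl_e r_e !eqxx.
Qed.

Definition proj (u : Qp) : prodQ R n k := fun i j => u (e i j).

Lemma stab_cl s l : stab s -> cl (s l) = cl l.
Proof.
by move=> /forallP /(_ l) /eqP h; apply: hx; rewrite -!clP.
Qed.

Lemma bridge u w : prod_dist (proj u) (proj w) = dS u w.
Proof.
apply/eqP; rewrite eq_le; apply/andP; split.
- have [s st E] := mn_att stab u w stab1.
  rewrite /dS /mnd E /prod_dist ler_sqrt ?Gcost_ge0 //.
  have tinj : forall i, injective (fun j => r i (s (e i j))).
    move=> i j1 j2 h.
    have := congr1 (e i) h; rewrite !e_r ?stab_cl ?cl_e // => /perm_inj.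
    exact: e_inj.
  apply: (@le_trans _ _ (\sum_(i < J) Gcost (proj u i) (proj w i) (perm.body (tinj i)))).
    by apply: ler_sum => i _; apply: Gd_le.
  rewrite GcostE /qsum (sum_part (fun l => \sum_(j0 < n) (u l 0 j0 - w (s l) 0 j0) ^+ 2)).
  apply: ler_sum => i _; rewrite le_eqVlt; apply/orP; left; apply/eqP.
  by apply: eq_bigr => j _; rewrite permE /proj e_r ?stab_cl ?cl_e //.
- pose tau i := projT1 (cid (Gd_att _ _ _ (proj u i) (proj w i))).
  have Htau i : Gdist (proj u i) (proj w i) ^+ 2 = Gcost (proj u i) (proj w i) (tau i).
    exact: (projT2 (cid (Gd_att _ _ _ (proj u i) (proj w i)))).
  pose sf l := e (cl l) (tau (cl l) (r (cl l) l)).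
  have sfE : forall i l, cl l = i -> sf l = e i (tau i (r i l)).
    by move=> i l <-.
  have sfinj : injective sf.
    move=> l1 l2 h.
    have c12 : cl l1 = cl l2 by rewrite -(cl_e (cl l1) (tau _ (r _ l1))) -/(sf l1) h cl_e.
    move: h; rewrite (sfE (cl l2) l1 c12) /sf => /e_inj /perm_inj h.
    by rewrite -(e_r _ _ c12) h e_r.
  pose sg := perm.body sfinj.
  have stsg : stab sg.
    by apply/forallP => l; rewrite permE /sf e_in clP.
  rewrite /dS /mnd /prod_dist ler_sqrt; last by apply: sumr_ge0 => i _; apply: sqr_ge0.
  apply: (le_trans (mn_le _ _ _ sg stsg)).
  rewrite GcostE /qsum (sum_part (fun l => \sum_(j0 < n) (u l 0 j0 - w (sg l) 0 j0) ^+ 2)).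
  apply: ler_sum => i _; rewrite Htau le_eqVlt; apply/orP; left; apply/eqP.
  by apply: eq_bigr => j _; rewrite permE (sfE i) ?cl_e // r_e.
Qed.

Lemma line_dist u (s t : R) : 0 <= s -> 0 <= t ->
  mnP stab (qscale s u) (qscale t u) = (t - s) ^+ 2 * sqn u.
Proof.
move=> s0 t0; apply/eqP; rewrite eq_le; apply/andP; split.
  apply: le_trans (mn_le _ _ _ 1%g stab1) _.
  rewrite GcostE /sqn -qsumZ le_eqVlt; apply/orP; left; apply/eqP.
  by apply: qsum_ext => i j; rewrite /qscale perm1 !mxE; ring.
have [sg _ ->] := mn_att stab (qscale s u) (qscale t u) stab1.
pose a := fun i j => u i 0 j; pose b := fun i j => u (sg i) 0 j.
have Hb : qsum (fun i j => b i j ^+ 2) = sqn u.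
  by rewrite /sqn /qsum [RHS](reindex_perm _ sg).
have X1 := qsum_expand a b 1 1.
have X2 := qsum_expand a b s t.
have P1 : 0 <= qsum (fun i j => (1 * a i j - 1 * b i j) ^+ 2).
  by apply: qsum_ge0 => *; apply: sqr_ge0.
have -> : Gcost (qscale s u) (qscale t u) sg = qsum (fun i j => (s * a i j - t * b i j) ^+ 2).
  by rewrite GcostE; apply: qsum_ext => i j; rewrite /qscale !mxE.
rewrite X2 Hb; rewrite X1 Hb in P1.
have su := sqn_ge0 u.
rewrite -/(sqn u) in P1 *.
set S := qsum _ in P1 *.
have := mulr_ge0 (mulr_ge0 s0 t0) P1.
move=> h; rewrite -subr_ge0; apply: (le_trans h).
rewrite le_eqVlt; apply/orP; left; apply/eqP; ring.
Qed.

Lemma line_geod u : exists g : geodesic A, dS (dir g) u = 0.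
Proof.
have e0 := eps_gt0.
set c := Num.sqrt (sqn u).
have c0 : 0 <= c by apply: sqrtr_ge0.
set T := eps / (c + 1).
have T0 : 0 < T by rewrite divr_gt0 // ltr_wpDl.
have TE : T * (c + 1) = eps by rewrite /T divfK // gt_eqF // ltr_wpDl.
have sm : forall t, 0 <= t -> t <= T -> sqn (qscale t u) < D2 / 16.
  move=> t h1 h2; apply: (small_scale _ _ c) => //; nra.
have g0 : Gdist (qadd A (qscale 0 u)) A = 0.
  have -> : qadd A (qscale 0 u) = A.
    by apply: funext => i; rewrite /qadd /qscale scale0r addr0.
  by rewrite GdistE mnd_refl.
have sp : exists c0 : R, 0 <= c0 /\ forall s t, 0 <= s <= T -> 0 <= t <= T ->
    Gdist (qadd A (qscale s u)) (qadd A (qscale t u)) = c0 * `|t - s|.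
  exists c; split => // s t /andP[s1 s2] /andP[t1 t2].
  rewrite Gdist_loc ?sm // /dS /mnd line_dist // sqrtrM ?sqr_ge0 // sqrtr_sqr.
  by rewrite mulrC.
pose g := Geodesic T0 g0 sp.
exists g.
have [t0 [t0p H]] := dir_spec g.
set V := dir g in H *.
set nu := c + Num.sqrt (sqn V) + 1.
have sV := sqrtr_ge0 (sqn V).
have nup : 0 < nu by rewrite /nu; lra.
set t := Num.min t0 (eps / nu).
have tp : 0 < t by rewrite lt_min t0p divr_gt0.
have tt0 : t <= t0 by rewrite ge_min lexx.
have tnu : t * nu <= eps by rewrite -ler_pdivlMr // ge_min lexx orbT.
have H1 := H t tp tt0; rewrite /= in H1.
rewrite Gdist_loc in H1; first last.
- apply: (small_scale _ _ nu) => //; first exact: ltW.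
  by rewrite /nu /c; have := sqrtr_ge0 (sqn u); lra.
- apply: (small_scale _ _ nu) => //; first exact: ltW.
  by rewrite /nu /c; have := sqrtr_ge0 (sqn u); lra.
rewrite /dS mnd_scale ?stab1 ?(ltW tp) // in H1.
have : mnd stab u V = 0.
  by move/eqP: H1; rewrite mulf_eq0 gt_eqF //= => /eqP.
by rewrite /dS (mnd_sym stab V u grp_stab).
Qed.

Definition conv (W : nat -> Qp) (L : Qp) :=
  forall e, 0 < e -> exists N, forall m, (N <= m)%N -> dS (W m) L < e.

Definition Lim (W : nat -> Qp) : Qp :=
  match pselect (exists L, conv W L) with
  | left h => projT1 (cid h)
  | right _ => A
  end.

Lemma LimP W : (exists L, conv W L) -> conv W (Lim W).
Proof.
move=> h; rewrite /Lim; case: pselect => // h'.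
exact: (projT2 (cid h')).
Qed.

Lemma lim_seq_eps (u : nat -> R) (l : R) :
  (forall e : R, 0 < e -> exists N, forall m, (N <= m)%N -> `|u m - l| < e) ->
  lim (u @ \oo) = l.
Proof.
move=> H; apply: cvg_lim => //.
apply/cvgrPdist_lt => e e0.
have [N HN] := H e e0.
near=> m. rewrite distrC. apply: HN. near: m. by exists N.
Unshelve. all: by end_near.
Qed.

Lemma dS_ge0 u w : 0 <= dS u w.
Proof. exact: sqrtr_ge0. Qed.

Lemma main_sig : exists f : (nat -> geodesic A) -> prodQ R n k,
    (forall s t : nat -> geodesic A, dA_cauchy s -> dA_cauchy t ->
        prod_dist (f s) (f t) = lim ((fun m => dA (s m) (t m)) @ \oo)) /\
    (forall y : prodQ R n k, exists s : nat -> geodesic A,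
        dA_cauchy s /\ prod_dist (f s) y = 0).
Proof.
have gS := grp_stab.
exists (fun s => proj (Lim (fun m => dir (s m)))); split.
- move=> s t cs ct.
  have cvS : forall s : nat -> geodesic A, dA_cauchy s -> conv (fun m => dir (s m)) (Lim (fun m => dir (s m))).
    move=> s0 c0; apply: LimP; apply: dS_complete => e e0.
    have [N HN] := c0 e e0; exists N => p q hp hq.
    by rewrite -dA_eq; apply: HN.
  have Hs := cvS s cs; have Ht := cvS t ct.
  rewrite bridge; symmetry; apply: lim_seq_eps => e e0.
  have e2 : 0 < e / 2 by rewrite divr_gt0.
  have [N1 H1] := Hs _ e2; have [N2 H2] := Ht _ e2.
  exists (maxn N1 N2) => m hm.
  have h1 := H1 m (leq_trans (leq_maxl _ _) hm).
  have h2 := H2 m (leq_trans (leq_maxr _ _) hm).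
  rewrite dA_eq.
  set a := dir (s m) in h1 *; set b := dir (t m) in h2 *.
  set La := Lim _ in h1 *; set Lb := Lim _ in h2 *.
  have T1 := mnd_tri stab a La b gS; have T2 := mnd_tri stab La Lb b gS.
  have T3 := mnd_tri stab La a Lb gS; have T4 := mnd_tri stab a b Lb gS.
  have S1 := mnd_sym stab a La gS; have S2 := mnd_sym stab b Lb gS.
  have S3 := mnd_sym stab Lb b gS.
  rewrite /dS in h1 h2 *.
  rewrite ltr_distlC; apply/andP; split; lra.
- move=> y.
  pose u : Qp := fun l => y (cl l) (r (cl l) l).
  have [g hg] := line_geod u.
  exists (fun _ => g); split.
    by move=> e e0; exists 0%N => p q _ _; rewrite dA_eq /dS mnd_refl ?stab1.
  have cv : conv (fun _ => dir g) (Lim (fun _ => dir g)).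
    by apply: LimP; exists (dir g) => e e0; exists 0%N => m _; rewrite /dS mnd_refl ?stab1.
  set L := Lim _ in cv *.
  have L0 : dS (dir g) L = 0.
    apply/eqP; rewrite eq_le dS_ge0 andbT; apply/ler_addgt0Pr => e e0.
    have [N HN] := cv e e0; rewrite add0r; exact: ltW (HN N (leqnn N)).
  have -> : prod_dist (proj L) y = prod_dist (proj L) (proj u).
    rewrite /prod_dist; congr Num.sqrt; apply: eq_bigr => i _.
    congr (Gdist _ _ ^+ 2); apply: funext => j.
    rewrite /proj /u.
    have key : forall i0 l (j0 : 'I_(k i0)), cl l = i0 -> r i0 l = j0 ->
        y (cl l) (r (cl l) l) = y i0 j0.
      by move=> i0 l j0 h; subst i0 => <-.
    exact: (esym (key i (e i j) j (cl_e i j) (r_e i j))).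
  rewrite bridge.
  apply/eqP; rewrite eq_le dS_ge0 andbT.
  have T := mnd_tri stab L (dir g) u gS.
  have S := mnd_sym stab L (dir g) gS.
  rewrite /dS in L0 hg T S *; lra.
Qed.

End Sig.




End Clusters.

End QS.

Theorem theorem3p7 (R : realType) (Q n : nat) (A : Qpt R Q n)
    (J : nat) (k : 'I_J -> nat) :
  is_signature A k ->
  exists f : (nat -> geodesic A) -> prodQ R n k,
    (forall s t : nat -> geodesic A, dA_cauchy s -> dA_cauchy t ->
        prod_dist (f s) (f t) = lim ((fun m => dA (s m) (t m)) @ \oo)) /\
    (forall y : prodQ R n k, exists s : nat -> geodesic A,
        dA_cauchy s /\ prod_dist (f s) y = 0).
Proof.
move=> [x [hx hk _ hcov hcard]].
exact: (@main_sig R Q n A J k x hx hk hcov hcard).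
Qed.
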